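(* Let $\mathcal{I}_{\textsf{BPP}}$ be an instance of the BPP, and consider a solution for $\mathcal{I}_{\textsf{BPP}}$ where $k$ bins are used. If $\mathcal{I}_{\textsf{EVSP}} = f(\mathcal{I}_{\textsf{BPP}})$, then there is a solution for $\mathcal{I}_{\textsf{EVSP}}$ such that $k$ vehicles are used to serve all item customers.
   Context: The electric vehicle sharing problem (EVSP): there is a set of stations, each with a capacity (number of parking spaces) and a number of charging facilities; a fleet of identical electric vehicles with battery capacity $\textsf{L}$ initially located at stations; and a set of customers, each with a set of driving demands $(s^{\text{out}}, t_i, s^{\text{in}}, t_j, \varepsilon)$ (pick-up station, departure time, drop-off station, arrival time, required energy). A demand is fulfilled by a vehicle if the vehicle is at the pick-up station at time $t_i$, its battery energy is at least $\varepsilon$, and there is a free parking space at the drop-off station; the vehicle's energy decreases by $\varepsilon$ and increases only by charging at a charging facility. A customer is served iff all its demands are fulfilled; the objective is to maximize the total rental time $\sum (t_j - t_i)$ over demands of served customers. The one-dimensional bin packing problem (BPP): given items $\mathcal{N} = \{1,\dots,n\}$ with sizes $\ell_i \in (0,1]$, find a partition $\{\mathcal{N}_1,\dots,\mathcal{N}_k\}$ of $\mathcal{N}$ such that the sizes in each part sum to at most $1$ and $k$ is minimized. The reduction $f$ maps a BPP instance $\mathcal{I}_{\textsf{BPP}}$ to the EVSP instance $\mathcal{I}_{\textsf{EVSP}}$ with $2n$ customers, each having a single demand: there is a single station $s$ with capacity $n$ and no charging facilities; there are $n$ fully charged vehicles initially at $s$, each with battery capacity $\textsf{L} = 1$; for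 each item $i \in \mathcal{N}$ there is an item customer with the single demand $(s, 2i, s, 2i+1, \ell_i)$; and there are $n$ dummy customers, each with the single demand $(s, 1, s, 2, \textsf{L})$. Each customer contributes rental time $1$ to the objective, so maximizing total rental time is equivalent to maximizing the number of served customers. *)

(* Defs.v *)
From HB Require Import structures.
From mathcomp Require Import all_boot all_order all_algebra.
Set Implicit Arguments. Unset Strict Implicit. Unset Printing Implicit Defensive.
Import Order.TTheory GRing.Theory Num.Theory.
Local Open Scope ring_scope.

Definition bpp_instance (R : realFieldType) (n : nat) (l : 'I_n -> R) : Prop :=
  forall i, 0 < l i <= 1.

(* A (feasible) BPP solution: a partition P of the item set whose blocks
   (the bins) have total size at most 1.  The number of bins used is #|P|. *)
Definition bpp_solution (R : realFieldType) (n : nat) (l : 'I_n -> R)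
    (P : {set {set 'I_n}}) : Prop :=
  partition P [set: 'I_n] /\ (forall B, B \in P -> \sum_(i in B) l i <= 1).

Record demand (ns : nat) (R : Type) := Demand {
  d_out : 'I_ns;   (* pick-up station *)
  d_dep : nat;     (* departure time *)
  d_in  : 'I_ns;   (* drop-off station *)
  d_arr : nat;     (* arrival time *)
  d_eps : R        (* required energy *)
}.

Record evsp (R : realFieldType) := EVSP {
  nst    : nat;                       (* stations 'I_nst *)
  cap    : 'I_nst -> nat;             (* parking spaces *)
  nchg   : 'I_nst -> nat;             (* charging facilities *)
  batL   : R;                         (* battery capacity L *)
  rate   : R;                         (* energy charged per time unit *)
  nveh   : nat;                       (* vehicles 'I_nveh *)
  v_init : 'I_nveh -> 'I_nst;         (* initial station *)
  e_init : 'I_nveh -> R;              (* initial energy *)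
  ncust  : nat;                       (* customers 'I_ncust *)
  dem    : 'I_ncust -> seq (demand nst R)  (* demands of each customer *)
}.

Arguments cap {R} e _.
Arguments nchg {R} e _.
Arguments v_init {R} e _.
Arguments e_init {R} e _.
Arguments dem {R} e _.

Section EVSPSemantics.
Variables (R : realFieldType) (I : evsp R).

Definition getd (c : 'I_(ncust I)) (j : 'I_(size (dem I c))) : demand (nst I) R :=
  tnth (in_tuple (dem I c)) j.
Arguments getd c j : clear implicits.

(* A solution: which vehicle fulfills which demand, together with the
   (discrete-time) trajectory of each vehicle: its position at each time
   (None = on the road), its energy, and whether it is charging during
   [t, t+1). *)
Record solution := Solution {
  asg : forall c : 'I_(ncust I), 'I_(size (dem I c)) -> option 'I_(nveh I);
  pos : 'I_(nveh I) -> nat -> option 'I_(nst I);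
  en  : 'I_(nveh I) -> nat -> R;
  chg : 'I_(nveh I) -> nat -> bool
}.
Arguments asg s c _ : clear implicits.
Arguments pos s v t.
Arguments en s v t.
Arguments chg s v t.

Variable S : solution.

Definition driving (v : 'I_(nveh I)) (t : nat) : Prop :=
  exists (c : 'I_(ncust I)) (j : 'I_(size (dem I c))), asg S c j = Some v /\ (d_dep (getd c j) <= t < d_arr (getd c j))%N.

Definition feasible : Prop :=
  (forall v, pos S v 0 = Some (v_init I v) /\ en S v 0 = e_init I v) /\
  (forall v t, 0 <= en S v t <= batL I) /\
  (forall c j v, asg S c j = Some v ->
     let d := getd c j in
     [/\ (d_dep d < d_arr d)%N,
         pos S v (d_dep d) = Some (d_out d),
         pos S v (d_arr d) = Some (d_in d),
         (forall t, (d_dep d < t < d_arr d)%N -> pos S v t = None) &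
         (d_eps d <= en S v (d_dep d) /\
          en S v (d_arr d) = en S v (d_dep d) - d_eps d)]) /\
  (* a vehicle fulfills at most one demand at a time *)
  (forall c j c' j' v, asg S c j = Some v -> asg S c' j' = Some v ->
     (c != c') || (val j != val j') ->
     (d_arr (getd c j) <= d_dep (getd c' j'))%N \/
     (d_arr (getd c' j') <= d_dep (getd c j))%N) /\
  (* when not driving, a vehicle stays parked; its energy increases only by
     charging *)
  (forall v t, ~ driving v t ->
     exists s, [/\ pos S v t = Some s, pos S v t.+1 = Some s &
       en S v t <= en S v t.+1 <= en S v t + (if chg S v t then rate I else 0)]) /\
  (forall s t, (#|[set v | chg S v t & pos S v t == Some s]| <= nchg I s)%N) /\
  (forall s t, (#|[set v | pos S v t == Some s]| <= cap I s)%N).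

Definition served (c : 'I_(ncust I)) : Prop :=
  forall j, asg S c j <> None.

End EVSPSemantics.
Arguments asg {R I} s c j.
Arguments getd {R} I c j.
Arguments pos {R I} s v t.
Arguments en {R I} s v t.
Arguments chg {R I} s v t.
Arguments feasible {R I} S.
Arguments served {R I} S c.

(* Customers 'I_(n + n): lshift n i (i : 'I_n) is the item customer of item
   i (items are 0-indexed, so item i has demand (s, 2(i+1), s, 2(i+1)+1, l i));
   rshift n _ are the n dummy customers with demand (s, 1, s, 2, L). *)
Definition reduction (R : realFieldType) (n : nat) (l : 'I_n -> R) : evsp R :=
  @EVSP R 1 (fun _ => n) (fun _ => 0%N) 1 1 n (fun _ => ord0) (fun _ => 1)
    (n + n)
    (fun c => match split c with
              | inl i => [:: Demand ord0 (2 * i.+1) ord0 (2 * i.+1).+1 (l i)]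
              | inr _ => [:: Demand ord0 1 ord0 2 1]
              end).

Definition item_vehicles (R : realFieldType) (n : nat) (l : 'I_n -> R)
    (S : solution (reduction l)) : {set 'I_(nveh (reduction l))} :=
  [set v | [exists i : 'I_n, [exists j, asg S (lshift n i) j == Some v]]].

(* Main.v *)
Require Import Defs.
From mathcomp Require Import all_boot all_order all_algebra.
From mathcomp Require Import zify.
Import Order.TTheory GRing.Theory Num.Theory.
Set Implicit Arguments. Unset Strict Implicit. Unset Printing Implicit Defensive.
Local Open Scope ring_scope.

Lemma pblock_imsetT (T : finType) (P : {set {set T}}) :
  partition P [set: T] -> pblock P @: [set: T] = P.
Proof.
move=> hP; have /and3P [/eqP cov triv n0] := hP.
apply/setP => B; apply/imsetP/idP.
- by move=> [x _ ->]; apply: pblock_mem; rewrite cov.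
- move=> BP; have /set0Pn [x xB] := partition_neq0 hP BP.
  by exists x => //; rewrite (def_pblock triv BP xB).
Qed.

Lemma split_lsh (n : nat) (i : 'I_n) : split (lshift n i) = inl i.
Proof. exact: (unsplitK (inl i)). Qed.

Lemma size_dem (R : realFieldType) (n : nat) (l : 'I_n -> R) c :
  size (dem (reduction l) c) = 1%N.
Proof. by rewrite /=; case: (split c). Qed.

Lemma getdE (R : realFieldType) (n : nat) (l : 'I_n -> R) c j :
  getd (reduction l) c j =
  match split c with
  | inl i => Demand ord0 (2 * i.+1) ord0 (2 * i.+1).+1 (l i)
  | inr _ => Demand (ord0 : 'I_1) 1 ord0 2 (1 : R)
  end.
Proof.
rewrite /getd (tnth_nth (Demand ord0 0 ord0 0 (0 : R))) /=.
move: (nat_of_ord j) (ltn_ord j) => m; rewrite size_dem.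
by case: (split c) => i /=; case: m.
Qed.

Section Constr.
Variables (R : realFieldType) (n : nat) (l : 'I_n -> R) (P : {set {set 'I_n}}).
Hypothesis hl : bpp_instance l.
Hypothesis hP : bpp_solution l P.

Definition vf (i : 'I_n) : 'I_n := insubd i (index (pblock P i) (enum P)).

Lemma cardP_le : (#|P| <= n)%N.
Proof.
rewrite -{1}(pblock_imsetT (proj1 hP)).
by apply: leq_trans (leq_imset_card _ _) _; rewrite cardsT card_ord.
Qed.

Lemma pblockP i : pblock P i \in P.
Proof.
have /and3P [/eqP cov _ _] := proj1 hP.
by apply: pblock_mem; rewrite cov inE.
Qed.

Lemma vf_val i : val (vf i) = index (pblock P i) (enum P).
Proof.
rewrite val_insubd ifT //.
apply: leq_trans cardP_le.
by rewrite cardE index_mem mem_enum pblockP.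
Qed.

Lemma vf_eq i j : vf i = vf j -> pblock P i = pblock P j.
Proof.
move=> /(congr1 val); rewrite !vf_val => h.
have := nth_index set0 (s := enum P) (x := pblock P i).
rewrite mem_enum pblockP h nth_index ?mem_enum ?pblockP //.
by move=> ->.
Qed.

Lemma l_ge0 j : 0 <= l j.
Proof. by have /andP [/ltW] := hl j. Qed.

Lemma sum_le1 (Q : pred 'I_n) v :
  \sum_(j | (vf j == v) && Q j) l j <= 1.
Proof.
case: (pickP (fun j => (vf j == v) && Q j)) => [j0 /andP [/eqP e0 _]|h];
  last by rewrite big_pred0 // ler01.
apply: le_trans (proj2 hP _ (pblockP j0)).
rewrite [X in _ <= X](bigID (fun j => (vf j == v) && Q j)) /=.
have -> : \sum_(j | (vf j == v) && Q j) l j =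
          \sum_(j in pblock P j0 | (vf j == v) && Q j) l j.
  apply: eq_bigl => j; case E: (vf j == v); rewrite /= ?andbF //.
  case: (Q j); rewrite ?andbF ?andbT //.
  have := vf_eq (etrans (eqP E) (esym e0)) => <-.
  have /and3P [/eqP cov _ _] := proj1 hP.
  by rewrite mem_pblock cov inE.
rewrite -[leLHS]addr0 lerD2l sumr_ge0 // => j _; exact: l_ge0.
Qed.

Definition enf (v : 'I_n) (t : nat) : R :=
  1 - \sum_(j : 'I_n | (vf j == v) && ((2 * j.+1).+1 <= t)%N) l j.

Definition Ssol : solution (reduction l) :=
  @Solution R (reduction l)
    (fun c _ => match split c with inl i => Some (vf i) | inr _ => None end)
    (fun _ _ => Some ord0) enf (fun _ _ => false).

Lemma enf_step v t : ~ (exists i, vf i = v /\ t = (2 * i.+1)%N) ->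
  enf v t.+1 = enf v t.
Proof.
move=> nd; rewrite /enf; congr (_ - _); apply: eq_bigl => j.
case E: (vf j == v) => //=.
case: (eqVneq t (2 * j.+1)%N) => [et|net].
  by exfalso; apply: nd; exists j; split => //; apply/eqP.
apply/idP/idP => H; lia.
Qed.

Lemma sum_arr i :
  \sum_(j : 'I_n | (vf j == vf i) && ((2 * j.+1).+1 <= (2 * i.+1).+1)%N) l j =
  l i + \sum_(j : 'I_n | (vf j == vf i) && ((2 * j.+1).+1 <= 2 * i.+1)%N) l j.
Proof.
rewrite (bigD1 i) ?eqxx ?leqnn //=; congr (_ + _); apply: eq_bigl => j.
case E: (vf j == vf i) => //=.
case: (eqVneq j i) => [->|nji]; first by rewrite /= ?eqxx ?andbF ?ltnn.
rewrite /= andbT; have : (j : nat) != i by [].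
move=> /eqP h; apply/idP/idP => H; lia.
Qed.

Lemma enf_arr i : enf (vf i) (2 * i.+1).+1 = enf (vf i) (2 * i.+1) - l i.
Proof. by rewrite /enf sum_arr opprD addrA addrAC. Qed.

Lemma enf_dep i : l i <= enf (vf i) (2 * i.+1).
Proof.
rewrite /enf lerBrDr.
have := sum_le1 (fun j : 'I_n => (2 * j.+1).+1 <= (2 * i.+1).+1)%N (vf i).
by rewrite sum_arr.
Qed.

Lemma enf_bound v t : 0 <= enf v t <= 1.
Proof.
rewrite /enf subr_ge0 lerBlDr lerDl (sum_le1 (fun j : 'I_n => (2 * j.+1).+1 <= t)%N).
by rewrite sumr_ge0 // => j _; exact: l_ge0.
Qed.

End Constr.

Lemma idx_lt (R : realFieldType) (n : nat) (l : 'I_n -> R) P :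
  bpp_solution l P -> forall B, B \in P -> (index B (enum P) < n)%N.
Proof.
move=> hP B BP; apply: leq_trans (cardP_le hP).
by rewrite cardE index_mem mem_enum.
Qed.

Theorem proposition5 (R : realFieldType) (n : nat) (l : 'I_n -> R)
    (P : {set {set 'I_n}}) (k : nat) :
  bpp_instance l -> bpp_solution l P -> #|P| = k ->
  exists S : solution (reduction l),
    [/\ feasible S,
        (forall i : 'I_n, served S (lshift n i)) &
        #|item_vehicles S| = k].
Proof.
move=> hl hP <-.
have o1 : forall i : 'I_n, (0 < size (dem (reduction l) (lshift n i)))%N.
  by move=> i; rewrite size_dem.
exists (Ssol l P); split.
- rewrite /feasible; split; [|split;[|split;[|split;[|split;[|split]]]]].
  + move=> v; split => //=.
    by rewrite /enf big_pred0 ?subr0 // => j; rewrite andbF.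
  + move=> v t /=; exact: enf_bound.
  + move=> c j v; rewrite /Ssol /= getdE.
    case: (split c) => [i|i] // [<-] /=.
    split => //.
    * by move=> t /andP [a b]; exfalso; lia.
    * split; [exact: enf_dep | exact: enf_arr].
  + move=> c j c' j' v; rewrite /Ssol /= !getdE.
    have hj := leq_trans (ltn_ord j) (eq_leq (size_dem c)).
    have hj' := leq_trans (ltn_ord j') (eq_leq (size_dem c')).
    move: (nat_of_ord j) (nat_of_ord j') hj hj' => a b ha hb.
    case Ec: (split c) => [i|i] // [<-]; case Ec': (split c') => [i'|i'] // _ /= H.
    case: (ltngtP i i') => [lt|gt|eq]; [left; lia|right; lia|exfalso].
    have ecc : c' = c.
      by rewrite -(splitK c) -(splitK c') Ec Ec' (val_inj eq).
    move: H; rewrite ecc eqxx /=; lia.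
  + move=> v t nd; exists ord0; split => //=.
    rewrite enf_step ?lexx ?addr0 ?lexx //.
    move=> [i [ei et]]; apply: nd; rewrite /driving.
    exists (lshift n i), (Ordinal (o1 i)).
    rewrite /Ssol /= getdE !split_lsh /=; split; [by rewrite ei|lia].
  + move=> s t; rewrite /Ssol /= leqn0 cards_eq0; apply/eqP/setP => v.
    by rewrite !inE.
  + move=> s t; apply: leq_trans (max_card _) _; by rewrite card_ord.
- by move=> i j; rewrite /Ssol /= split_lsh.
have -> : item_vehicles (Ssol l P) = vf P @: setT.
  apply/setP => v; rewrite inE; apply/existsP/imsetP.
  - case=> i /existsP [j]; rewrite /Ssol /= split_lsh => /eqP [<-].
    by exists i.
  - case=> i _ ->; exists i; apply/existsP; exists (Ordinal (o1 i)).
    by rewrite /Ssol /= split_lsh.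
case: (pickP (@predT 'I_n)) => [d _|h].
  have -> : vf P @: setT =
      (fun B => insubd d (index B (enum P))) @: (pblock P @: setT).
    rewrite -imset_comp; apply: eq_imset => i /=; apply: val_inj.
    by rewrite (vf_val hP) val_insubd ifT // (idx_lt hP) // (pblockP hP).
  rewrite pblock_imsetT; last exact: (proj1 hP).
  rewrite card_in_imset // => B1 B2 h1 h2 /(congr1 val).
  rewrite !val_insubd !ifT ?(idx_lt hP) // => e.
  by rewrite -(nth_index set0 (s := enum P) (x := B1)) ?mem_enum // e nth_index ?mem_enum.
have n0 : n = 0%N by rewrite -(card_ord n) (eq_card0 h).
apply/eqP; rewrite eqn_leq; apply/andP; split.
  apply: leq_trans (leq_imset_card _ _) _; by rewrite cardsT card_ord; lia.
by have := cardP_le hP; lia.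
Qed.
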